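(* Let $a,b,x\ge 0$ be integers and let $(p_m)_{m\ge 2}$ be numbers in $[0,1]$. Suppose the transition probabilities of the constrained walk satisfy $p(r,s)=p_{r+s}$ for all integers $r,s>0$. Then $B(a,b,x)$ equals the probability that an unconstrained walker starting at $(a,b+x+1)$ and taking $a+b+x$ steps ends at one of the $x+1$ points $(-t,1+t)$, $0\le t\le x$, where the unconstrained walker, from any lattice point $(r,s)$ with $r+s\ge 2$, independently moves West (to $(r-1,s)$) with probability $p_{r+s}$ and South (to $(r,s-1)$) with probability $1-p_{r+s}$.
   Context: Constrained walks: let $p(r,s)\in[0,1]$ be given for all integers $r,s>0$. A walker at a lattice point $(r,s)$ with $r,s>0$ moves West to $(r-1,s)$ with probability $p(r,s)$ and South to $(r,s-1)$ with probability $1-p(r,s)$, independently of the past; a walker at a point $(r,0)$ with $r>0$ always moves West, and a walker at $(0,s)$ with $s>0$ always moves South, until the origin is reached. Two walkers $U$ and $L$ start at $(a,b+x+1)$ and $(a+x+1,b)$ respectively and move simultaneously and independently, one step per time unit (both start on the line $X+Y=a+b+x+1$, so at each time they lie on a common antidiagonal). $B(a,b,x)$ is the probability that the first time the two walkers occupy the same lattice point is when they both reach the origin. *)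

(* Defs.v *)
From HB Require Import structures.
From mathcomp Require Import all_boot all_order all_algebra.
Set Implicit Arguments. Unset Strict Implicit. Unset Printing Implicit Defensive.
Import Order.TTheory GRing.Theory Num.Theory.
Local Open Scope ring_scope.

Section Walks.
Variable R : realFieldType.

(* Probability that the constrained walker at (r,s) steps West:
   p(r,s) if r,s>0; 1 on the positive X-axis (s = 0, r > 0);
   0 on the positive Y-axis (r = 0, s > 0) (it then steps South).
   (At the origin the walker has stopped; the value is irrelevant.) *)
Definition west_prob (p : nat -> nat -> R) (r s : nat) : R :=
  if r == 0%N then 0 else if s == 0%N then 1 else p r s.

(* meet_origin p k r1 s1 r2 s2 : probability that two independent constrained
   walkers, currently at (r1,s1) and (r2,s2) and moving simultaneously, first
   occupy a common lattice point at the origin (k = fuel, number of steps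
   allowed; for walkers on the antidiagonal X+Y=k, k steps bring both to the
   origin). *)
Fixpoint meet_origin (p : nat -> nat -> R) (k r1 s1 r2 s2 : nat) : R :=
  if (r1 == r2) && (s1 == s2) then ((r1 == 0%N) && (s1 == 0%N))%:R
  else match k with
  | 0 => 0
  | k'.+1 =>
      let w1 := west_prob p r1 s1 in
      let w2 := west_prob p r2 s2 in
      w1 * w2 * meet_origin p k' r1.-1 s1 r2.-1 s2
      + w1 * (1 - w2) * meet_origin p k' r1.-1 s1 r2 s2.-1
      + (1 - w1) * w2 * meet_origin p k' r1 s1.-1 r2.-1 s2
      + (1 - w1) * (1 - w2) * meet_origin p k' r1 s1.-1 r2 s2.-1
  end.

Definition Bprob (p : nat -> nat -> R) (a b x : nat) : R :=
  meet_origin p (a + b + x + 1) a (b + x + 1) (a + x + 1) b.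

Fixpoint free_prob (pm : nat -> R) (k : nat) (r s : int) (T : pred (int * int)) : R :=
  match k with
  | 0 => (T (r, s))%:R
  | k'.+1 =>
      pm (absz (r + s)) * free_prob pm k' (r - 1) s T
      + (1 - pm (absz (r + s))) * free_prob pm k' r (s - 1) T
  end.

End Walks.

Definition end_points (x : nat) : pred (int * int) :=
  fun z => [exists t : 'I_x.+1, z == (- (t : nat)%:Z, 1 + (t : nat)%:Z)%R].

(* Main.v *)
Require Import Defs.
From mathcomp Require Import all_boot all_order all_algebra.
From mathcomp Require Import zify ring lra.
Set Implicit Arguments.
Import Order.TTheory GRing.Theory Num.Theory.
Local Open Scope ring_scope.

Section S.
Variable R : realFieldType.
Variable pm : nat -> R.

Fixpoint Qz (k : nat) (c : int) : R :=
  match k with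
  | 0 => ((0 < c)%R)%:R
  | k'.+1 => pm k.+1 * Qz k' (c - 1) + (1 - pm k.+1) * Qz k' c
  end.

Lemma Qz_le0 k c : c <= 0 -> Qz k c = 0.
Proof.
elim: k c => [|k IH] c hc /=.
  by rewrite ltNge hc.
rewrite !IH //; first by rewrite !mulr0 addr0.
lia.
Qed.

Lemma Qz_ge k c : (k.+1)%:Z <= c -> Qz k c = 1.
Proof.
elim: k c => [|k IH] c hc /=.
  by have -> : (0 < c) by lia.
rewrite !IH; try lia. ring.
Qed.

Lemma ep_base x (r s : int) : r + s = 1 ->
  (end_points x (r, s))%:R = (Qz 0 (r + x%:Z + 1) - Qz 0 r :> R).
Proof.
move=> hrs /=; rewrite /end_points.
case: (boolP [exists t : 'I_x.+1, _]) => [/existsP [t /eqP [-> _]] | /existsPn H].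
  have h1 : (0 < - (t : nat)%:Z + x%:Z + 1). have := ltn_ord t. lia.
  have h2 : (0 < - (t : nat)%:Z) = false. lia.
  by rewrite h1 h2 subr0.
have [h|h] := boolP ((- x%:Z <= r) && (r <= 0)).
  exfalso. have ht : (absz r < x.+1)%N by lia.
  move: (H (Ordinal ht)) => /eqP; apply. rewrite /=. congr pair; lia.
have [h3|h3] := boolP (0 < r).
  have -> : (0 < r + x%:Z + 1) by lia. by rewrite subrr.
have -> : (0 < r + x%:Z + 1) = false by lia.
by rewrite /= subr0.
Qed.

Lemma free_Qz x k (r s : int) : r + s = (k.+1)%:Z ->
  free_prob pm k r s (end_points x) = Qz k (r + x%:Z + 1) - Qz k r.
Proof.
elim: k r s => [|k IH] r s hrs.
  by rewrite /= ep_base.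
rewrite /= hrs /= (IH (r - 1) s); last lia.
rewrite (IH r (s - 1)); last lia.
have -> : r - 1 + x%:Z + 1 = r + x%:Z + 1 - 1 by ring.
ring.
Qed.
End S.
Arguments Qz {R} pm k c.
Arguments Qz_ge {R} pm k c.
Arguments Qz_le0 {R} pm k c.
Section M.
Variable R : realFieldType.
Variable p : nat -> nat -> R.
Variable pm : nat -> R.
Hypothesis hp : forall r s : nat, (0 < r)%N -> (0 < s)%N -> p r s = pm (r + s)%N.

Lemma MO_S k r1 s1 r2 s2 : ~~ ((r1 == r2) && (s1 == s2)) ->
  meet_origin p k.+1 r1 s1 r2 s2 =
      west_prob p r1 s1 * west_prob p r2 s2 * meet_origin p k r1.-1 s1 r2.-1 s2
      + west_prob p r1 s1 * (1 - west_prob p r2 s2) * meet_origin p k r1.-1 s1 r2 s2.-1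
      + (1 - west_prob p r1 s1) * west_prob p r2 s2 * meet_origin p k r1 s1.-1 r2.-1 s2
      + (1 - west_prob p r1 s1) * (1 - west_prob p r2 s2) * meet_origin p k r1 s1.-1 r2 s2.-1.
Proof. by move=> h /=; rewrite (negbTE h). Qed.

Lemma wp0 s : west_prob p 0 s = 0. Proof. by []. Qed.
Lemma wpX r : (0 < r)%N -> west_prob p r 0 = 1.
Proof. by rewrite /west_prob; case: r. Qed.
Lemma wpI r s : (0 < r)%N -> (0 < s)%N -> west_prob p r s = pm (r + s)%N.
Proof. rewrite /west_prob; case: r => // r; case: s => // s _ _. exact: hp. Qed.

Lemma QzS k c : Qz pm k.+1 c = pm k.+2 * Qz pm k (c - 1) + (1 - pm k.+2) * Qz pm k c.
Proof. by []. Qed.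

Lemma MO_Qz k u s1 l s2 : (u <= l)%N -> (u + s1 = k.+1)%N -> (l + s2 = k.+1)%N ->
  meet_origin p k.+1 u s1 l s2 = Qz pm k l - Qz pm k u.
Proof.
elim: k u s1 l s2 => [|k IH] u s1 l s2 hul h1 h2.
  have [e|ne] := eqVneq u l.
    subst l. have -> : s1 = s2 by lia.
    rewrite /= !eqxx /= subrr. by have -> : (u == 0%N) && (s2 == 0%N) = false by lia.
  have -> : u = 0%N by lia. have -> : l = 1%N by lia.
  have -> : s1 = 1%N by lia. have -> : s2 = 0%N by lia.
  rewrite /= /west_prob /=. ring.
have [e|ne] := eqVneq u l.
  subst l. have -> : s1 = s2 by lia.
  rewrite /= !eqxx /= subrr. by have -> : (u == 0%N) && (s2 == 0%N) = false by lia.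
have hne : ~~ ((u == l) && (s1 == s2)) by rewrite (negbTE ne).
rewrite MO_S //.
have hul' : (u < l)%N by lia.
have lpos : (0 < l)%N by lia.
have Q0 : Qz pm k 0 = 0 by rewrite Qz_le0.
have Q1 : Qz pm k (0 - 1) = 0 by rewrite Qz_le0.
have Q2 : Qz pm k (k.+1)%:Z = 1 by rewrite Qz_ge.
have Q3 : Qz pm k.+1 (k.+2)%:Z = 1 by rewrite Qz_ge.
have Q4 : Qz pm k.+1 0 = 0 by rewrite Qz_le0.
case: (posnP u) => [u0|upos].
  subst u. rewrite wp0.
  case: (posnP s2) => [s20|s2pos].
    subst s2. have -> : l = k.+2 by lia. rewrite wpX //.
    rewrite (IH 0%N s1.-1 k.+1 0%N) //; try lia.
    rewrite Q0 Q2 Q3 Q4. ring.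
  rewrite wpI // (_ : (l + s2)%N = k.+2) //.
  rewrite (IH 0%N s1.-1 l.-1 s2); try lia.
  rewrite (IH 0%N s1.-1 l s2.-1); try lia.
  rewrite Q4 QzS Q0.
  have -> : (l.-1)%:Z = l%:Z - 1 by lia.
  ring.
rewrite wpI; try lia. rewrite (_ : (u + s1)%N = k.+2) //.
case: (posnP s2) => [s20|s2pos].
  subst s2. have -> : l = k.+2 by lia. rewrite wpX //.
  rewrite (IH u.-1 s1 k.+1 0%N); try lia.
  rewrite (IH u s1.-1 k.+1 0%N); try lia.
  rewrite Q2 Q3 QzS.
  have -> : (u.-1)%:Z = u%:Z - 1 by lia.
  ring.
rewrite wpI; try lia. rewrite (_ : (l + s2)%N = k.+2) //.
rewrite (IH u.-1 s1 l.-1 s2); try lia.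
rewrite (IH u.-1 s1 l s2.-1); try lia.
rewrite (IH u s1.-1 l.-1 s2); try lia.
rewrite (IH u s1.-1 l s2.-1); try lia.
have -> : (u.-1)%:Z = u%:Z - 1 by lia.
have -> : (l.-1)%:Z = l%:Z - 1 by lia.
rewrite !QzS. ring.
Qed.
End M.

Theorem theorem4 (R : realFieldType) (p : nat -> nat -> R) (pm : nat -> R)
    (a b x : nat)
    (hp01 : forall r s : nat, (0 < r)%N -> (0 < s)%N -> 0 <= p r s <= 1)
    (hpm01 : forall m : nat, (2 <= m)%N -> 0 <= pm m <= 1)
    (hp : forall r s : nat, (0 < r)%N -> (0 < s)%N -> p r s = pm (r + s)%N) :
  Bprob p a b x =
  free_prob pm (a + b + x) (a%:Z) ((b + x + 1)%N%:Z) (end_points x).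
Proof.
rewrite /Bprob (_ : (a + b + x + 1)%N = (a + b + x).+1); last lia.
rewrite (@MO_Qz R p pm hp); try lia.
rewrite (@free_Qz R pm x (a + b + x) a%:Z ((b + x + 1)%N%:Z)); last lia.
by have -> : ((a + x + 1)%N%:Z = a%:Z + x%:Z + 1) by lia.
Qed.
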